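(* Let $G>I$ be a finite group with $Z(G)=I$ and $(C_1,C_2,C_3)$ a class vector of $G$ with $l^i(C_1,C_2,C_3)>0$. Let $[\underline{\sigma}]=[\sigma_1,\sigma_2,\sigma_3]\in\Sigma^i(C_1,C_2,C_3)$ with $\sigma_1^4=\sigma_2^4=\iota$ and $G=\langle\sigma_1^{-2}\sigma_3\sigma_1^2,\sigma_1^{-1}\sigma_3\sigma_1,\sigma_3\rangle$, and let $C=C_3$. Then $$v=[\sigma_1^{-2}\sigma_3\sigma_1^2,\ \sigma_1^{-1}\sigma_3\sigma_1,\ \sigma_3,\ \sigma_1^{-3}\sigma_3\sigma_1^3]\in\Sigma^i(C,C,C,C)$$ and $v^{\alpha_{4,0}}=v$, where $\alpha_{4,0}=\beta_2\beta_3\beta_4$.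
   Context: $\iota$ is the identity and $I$ the trivial group. For conjugacy classes $C_1,\dots,C_m$, $\Sigma^i(C_1,\dots,C_m)$ is the set of $G$-conjugacy classes $[\sigma_1,\dots,\sigma_m]$ (simultaneous conjugation) of tuples with $\sigma_j\in C_j$, $\langle\sigma_1,\dots,\sigma_m\rangle=G$, $\sigma_1\cdots\sigma_m=\iota$, and $l^i(C_1,\dots,C_m)=|\Sigma^i(C_1,\dots,C_m)|$. The element $\alpha_{4,0}=\beta_2\beta_3\beta_4$ of the Hurwitz braid group $H_4$ acts by $[\sigma_1,\sigma_2,\sigma_3,\sigma_4]^{\alpha_{4,0}}=[\sigma_2,\sigma_3,\sigma_4,\sigma_1]$. *)

(* Defs.v *)
From mathcomp Require Import all_boot all_fingroup all_solvable.
Set Implicit Arguments. Unset Strict Implicit. Unset Printing Implicit Defensive.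
Local Open Scope group_scope.

Section Defs.
Variables (gT : finGroupType) (n : nat).

Definition Sigma_tuples (G : {set gT}) (Cs : n.-tuple {set gT}) : {set n.-tuple gT} :=
  [set s : n.-tuple gT | [&& [forall i : 'I_n, tnth s i \in tnth Cs i],
                             <<[set x | x \in s]>> == G &
                             \prod_(x <- s) x == 1]].

Definition tclass (G : {set gT}) (s : n.-tuple gT) : {set n.-tuple gT} :=
  [set [tuple of map (fun x => x ^ g) s] | g in G].

Definition Sigma_i (G : {set gT}) (Cs : n.-tuple {set gT}) : {set {set n.-tuple gT}} :=
  tclass G @: Sigma_tuples G Cs.

Definition l_i (G : {set gT}) (Cs : n.-tuple {set gT}) : nat := #|Sigma_i G Cs|.

End Defs.

(* alpha_{4,0} = beta_2 beta_3 beta_4 acting on 4-tuples: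
   [s1,s2,s3,s4] |-> [s2,s3,s4,s1]. *)
Definition alpha40 (gT : finGroupType) (s : 4.-tuple gT) : 4.-tuple gT :=
  [tuple tnth s (inord 1); tnth s (inord 2); tnth s (inord 3); tnth s (inord 0)].

(* Main.v *)
Require Import Defs.
From mathcomp Require Import all_boot all_fingroup all_solvable.
Local Open Scope group_scope.

Lemma classJ (gT : finGroupType) (G : {group gT}) (C : {set gT}) :
  forall y g,
  C \in classes G -> y \in C -> g \in G -> y ^ g \in C.
Proof.
move=> y g; case/imsetP=> x xG -> /imsetP[h hG ->] gG.
by rewrite -conjgM memJ_class // groupM.
Qed.

Lemma class_sub (gT : finGroupType) (G : {group gT}) (C : {set gT}) :
  forall y,
  C \in classes G -> y \in C -> y \in G.
Proof.
move=> y; case/imsetP=> x xG -> /imsetP[h hG ->].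
by rewrite groupJ.
Qed.

Lemma tclass_refl (gT : finGroupType) n (G : {group gT}) (s : n.-tuple gT) :
  s \in tclass G s.
Proof.
apply/imsetP; exists 1; first exact: group1.
by apply: val_inj => /=; rewrite -{1}(map_id s); apply: eq_map => x; rewrite conjg1.
Qed.

Lemma tclassJ (gT : finGroupType) n (G : {group gT}) (s : n.-tuple gT) h :
  h \in G -> tclass G [tuple of map (fun x => x ^ h) s] = tclass G s.
Proof.
move=> hG; apply/setP=> t; apply/imsetP/imsetP=> [[g gG ->]|[g gG ->]].
  exists (h * g); first by rewrite groupM.
  apply: val_inj => /=; rewrite -map_comp; apply: eq_map => x /=.
  by rewrite conjgM.
exists (h^-1 * g); first by rewrite groupM ?groupV.
apply: val_inj => /=; rewrite -map_comp; apply: eq_map => x /=.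
by rewrite conjgM conjgK.
Qed.

Theorem proposition8 (gT : finGroupType) (G : {group gT})
    (C1 C2 C3 : {set gT}) (s1 s2 s3 : gT) :
  G :!=: 1 ->
  'Z(G) = 1 ->
  C1 \in classes G -> C2 \in classes G -> C3 \in classes G ->
  0 < l_i G [tuple C1; C2; C3] ->
  tclass G [tuple s1; s2; s3] \in Sigma_i G [tuple C1; C2; C3] ->
  s1 ^+ 4 = 1 -> s2 ^+ 4 = 1 ->
  G = <<[set s3 ^ (s1 ^+ 2); s3 ^ s1; s3]>> :> {set gT} ->
  let C := C3 in
  let v := [tuple s3 ^ (s1 ^+ 2); s3 ^ s1; s3; s3 ^ (s1 ^+ 3)] in
  tclass G v \in Sigma_i G [tuple C; C; C; C] /\
  tclass G (alpha40 v) = tclass G v.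
Proof.
move=> _ _ cC1 cC2 cC3 _ /imsetP[t tS eqt] a4 b4 genG C v.
have : [tuple s1; s2; s3] \in tclass G t by rewrite -eqt tclass_refl.
case/imsetP=> g gG eqs.
move: tS; rewrite inE => /and3P[/forallP Ht _ Hp].
have H0 := Ht (@Ordinal 3 0 isT); have H1 := Ht (@Ordinal 3 1 isT);
have H2 := Ht (@Ordinal 3 2 isT).
clear eqt Ht; move: eqs H0 H1 H2 Hp.
case: t => [[|t1 [|t2 [|t3 []]]]] //= Ht3 eqs.
rewrite !(tnth_nth 1) /= => H0 H1 H2 Hp.
move/(congr1 val): eqs => /= [e1 e2 e3].
have s1C : s1 \in C1 by rewrite e1 (classJ _ _ _ _ _ cC1).
have s3C : s3 \in C3 by rewrite e3 (classJ _ _ _ _ _ cC3).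
have s1G : s1 \in G := class_sub _ _ _ _ cC1 s1C.
have s3G : s3 \in G := class_sub _ _ _ _ cC3 s3C.
have p1 : s1 * s2 * s3 = 1.
  move: Hp; rewrite !big_cons big_nil mulg1 => /eqP Hp.
  by rewrite e1 e2 e3 -!conjMg -mulgA Hp conj1g.
have a3 : s1 ^+ 3 = s1^-1.
  by apply/eqP; rewrite eq_sym eq_invg_mul -expgS a4.
split.
  apply/imsetP; exists v => //.
  rewrite inE; apply/and3P; split.
  - apply/forallP => -[[|[|[|[|i]]]] Hi] //; rewrite (tnth_nth 1) /=;
      by rewrite (classJ _ _ _ _ _ cC3) // groupX.
  - rewrite eqEsubset; apply/andP; split.
      rewrite gen_subG; apply/subsetP => x; rewrite inE !in_cons in_nil orbF.
      by case/or4P => /eqP ->; rewrite ?groupJ ?groupX.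
    rewrite genG genS //; apply/subsetP => x.
    rewrite !inE -orbA.
    by case/or3P => ->; rewrite ?orbT.
  - rewrite !big_cons big_nil mulg1.
    have -> : s3 = (s1 * s2)^-1 by apply/eqP; rewrite eq_sym eq_invg_mul p1.
    rewrite a3 !conjgE !expgS expg0 mulg1 !invMg.
    apply/eqP; rewrite invgK !mulgA !(mulgK, mulgKV).
    transitivity (s1^-1 * s1^-1 * (s2^-1)^+4 * s1^-1 * s1^-1).
      by rewrite !expgS expg0 mulg1 !mulgA.
    rewrite expgVn b4 invg1 mulg1.
    transitivity ((s1^-1)^+4); first by rewrite !expgS expg0 mulg1 !mulgA.
    by rewrite expgVn a4 invg1.
rewrite -(@tclassJ _ _ G v _ (groupX 3 s1G)).
congr tclass; apply: val_inj => /=.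
rewrite /alpha40 !(tnth_nth 1) /= !inordK //=.
have e5 : s1 ^+ 2 * s1 ^+ 3 = s1.
  by rewrite -expgnDr (expgnDr s1 4 1) a4 mul1g expg1.
have e4 : s1 * s1 ^+ 3 = 1 by rewrite -expgS a4.
have e6 : s1 ^+ 3 * s1 ^+ 3 = s1 ^+ 2.
  by rewrite -expgnDr (expgnDr s1 4 2) a4 mul1g.
by rewrite -!conjgM e5 e4 e6 conjg1.
Qed.
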